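(* If $w\in S_n$ avoids the pattern $231$, then every permutation hop-equivalent to $w$ avoids $231$; that is, $P_w\subseteq S_n(231)$. Equivalently, if $w$ contains $231$ then $H_s(w)$ contains $231$ for every $s\in F(w)$.
   Context: A permutation $w\in S_n$ contains $231$ if there are indices $i<j<k$ with $w(k)<w(i)<w(j)$, and avoids $231$ otherwise; $S_n(231)$ is the set of $231$-avoiding permutations. For $w=w(1)\cdots w(n)$ set $w(0)=w(n+1)=\infty$. A letter $w(i)$, $1\le i\le n$, is free if $w(i-1)<w(i)<w(i+1)$ (upslope) or $w(i-1)>w(i)>w(i+1)$ (downslope); $F(w)$ is the set of free letters. For $j=w(i)\in F(w)$ define $H_j(w)$: if $j$ is on a downslope, take the smallest $k>i$ with $w(k)<j<w(k+1)$ and let $H_j(w)=w(1)\cdots w(i-1)w(i+1)\cdots w(k)\,j\,w(k+1)\cdots w(n)$; if $j$ is on an upslope, take the largest $k<i$ with $w(k-1)>j>w(k)$ and let $H_j(w)=w(1)\cdots w(k-1)\,j\,w(k)\cdots w(i-1)w(i+1)\cdots w(n)$. Hop-equivalence is the equivalence relation generated by $w\sim H_j(w)$; $P_w$ is the class of $w$. *)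

(* Defs.v *)
(* Permutations of [n] are sequences w = w(1)...w(n) of nat
   (stored 0-indexed in a seq) that are rearrangements of 1..n. *)
From Stdlib Require Import Relations.
From mathcomp Require Import all_boot.
Set Implicit Arguments. Unset Strict Implicit. Unset Printing Implicit Defensive.

Definition is_perm (n : nat) (w : seq nat) : Prop := perm_eq w (iota 1 n).

Definition contains231 (w : seq nat) : Prop :=
  exists i j k, [/\ i < j, j < k, k < size w & nth 0 w k < nth 0 w i < nth 0 w j].
Definition avoids231 (w : seq nat) : Prop := ~ contains231 w.

(* 1-indexed letter w(i) for 1 <= i <= n, with w(0) = w(n+1) = "infinity";
   infinity is represented by n+1, which exceeds every letter of w ∈ S_n. *)
Definition wext (w : seq nat) (i : nat) : nat :=
  if (0 < i <= size w) then nth 0 w i.-1 else (size w).+1.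

Definition downslope (w : seq nat) (i : nat) : bool :=
  (wext w i.-1 > wext w i) && (wext w i > wext w i.+1).
Definition upslope (w : seq nat) (i : nat) : bool :=
  (wext w i.-1 < wext w i) && (wext w i < wext w i.+1).

Definition free_pos (w : seq nat) (i : nat) : bool :=
  (0 < i <= size w) && (upslope w i || downslope w i).

Definition rem_at (i : nat) (w : seq nat) : seq nat := take i w ++ drop i.+1 w.
Definition ins_at (k : nat) (x : nat) (w : seq nat) : seq nat := take k w ++ x :: drop k w.

Definition hop_down_target (w : seq nat) (i k : nat) : Prop :=
  [/\ i < k <= size w, wext w k < wext w i < wext w k.+1 &
      forall k', i < k' < k -> ~~ (wext w k' < wext w i < wext w k'.+1)].

Definition hop_up_target (w : seq nat) (i k : nat) : Prop :=
  [/\ 0 < k < i, wext w i < wext w k.-1 & wext w k < wext w i] /\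
  (forall k', k < k' < i -> ~~ ((wext w k' < wext w i) && (wext w i < wext w k'.-1))).

(* In both cases H_j(w) is obtained
   by deleting w(i) and re-inserting it so that it ends up between the
   original w(k) and w(k+1) (downslope) resp. w(k-1) and w(k) (upslope);
   in 0-based terms this is insertion at index k-1 of the shortened word. *)
Definition hop (w v : seq nat) : Prop :=
  exists i k,
    0 < i <= size w /\
    ((downslope w i /\ hop_down_target w i k) \/
     (upslope w i /\ hop_up_target w i k)) /\
    v = ins_at k.-1 (wext w i) (rem_at i.-1 w).

Definition hop_equiv : relation (seq nat) := clos_refl_sym_trans (seq nat) hop.

(* Main.v *)
Require Import Defs.
From Stdlib Require Import Relations.
From mathcomp Require Import all_boot.
From mathcomp Require Import zify.
Set Implicit Arguments. Unset Strict Implicit. Unset Printing Implicit Defensive.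

Definition c231 (s : seq nat) := exists x y z : nat,
  [/\ x \in s, y \in s, z \in s, index x s < index y s & index y s < index z s] /\ z < x < y.

Lemma c231E s : uniq s -> contains231 s <-> c231 s.
Proof.
move=> us; split.
- case=> i [j [k [ij jk ks /andP[h1 h2]]]].
  exists (nth 0 s i), (nth 0 s j), (nth 0 s k).
  have ? : i < size s by apply: (ltn_trans ij); apply: ltn_trans ks.
  have ? : j < size s by apply: ltn_trans ks.
  rewrite !index_uniq // !mem_nth //; split => //; apply/andP; split => //.
- case=> x [y [z [[xs ys zs ixy iyz] /andP[h1 h2]]]].
  exists (index x s), (index y s), (index z s).
  rewrite !nth_index //; split => //; first by rewrite index_mem.
  by apply/andP.
Qed.

Section Key.
Variables (A B C : seq nat) (j : nat).
Let X := A ++ j :: B ++ C.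
Let Y := A ++ B ++ j :: C.
Hypothesis uX : uniq X.
Hypothesis hB : all (fun b => b < j) B.
Hypothesis hA : A = [::] \/ j < last 0 A.
Hypothesis hC : C = [::] \/ j < head 0 C.

Lemma memXY u : (u \in X) = (u \in Y).
Proof. by apply: perm_mem; rewrite /X /Y perm_cat2l -cat1s perm_catCA. Qed.

Lemma disj : [/\ j \notin A, j \notin B, j \notin C,
  forall u, u \in A -> (u \notin B) && (u \notin C) & forall u, u \in B -> u \notin C].
Proof.
move: uX; rewrite /X cat_uniq /= cat_uniq mem_cat.
move=> /andP[uA] /andP[/norP[jA hh]] /andP[/norP[jB jC]] /andP[uB] /andP[hBC uC].
split => //.
- move=> u uA'; rewrite -negb_or -mem_cat; apply/negP => ubc; move/hasP: hh; apply; by exists u.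
- move=> u uB'; apply/negP => uC'; move/hasP: hBC; apply; by exists u.
Qed.

Lemma idxA u : u \in A -> index u X = index u A /\ index u Y = index u A /\ index u A < size A.
Proof. by move=> uA; rewrite /X /Y !index_cat uA index_mem. Qed.

Lemma idxj : index j X = size A /\ index j Y = size A + size B.
Proof.
case: disj => jA jB jC _ _.
by rewrite /X /Y !index_cat (negbTE jA) (negbTE jB) /= eqxx !addn0.
Qed.

Lemma idxB u : u \in B -> index u X = size A + (index u B).+1 /\ index u Y = size A + index u B
  /\ index u B < size B.
Proof.
case: disj => jA jB jC dA _ uB.
have uA : u \notin A by apply/negP => /dA; rewrite uB.
have ju : j != u by apply/negP => /eqP ju; rewrite ju uB in jB.
by rewrite /X /Y !index_cat (negbTE uA) /= (negbTE ju) index_cat uB index_mem.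
Qed.

Lemma idxC u : u \in C -> index u X = size A + (size B + index u C).+1 /\
  index u Y = size A + (size B + index u C).+1.
Proof.
case: disj => jA jB jC dA dB uC.
have uA : u \notin A by apply/negP => /dA /andP[_]; rewrite uC.
have uB : u \notin B by apply/negP => /dB; rewrite uC.
have ju : j != u by apply/negP => /eqP ju; rewrite ju uC in jC.
rewrite /X /Y !index_cat (negbTE uA) /= (negbTE ju) !index_cat (negbTE uB) /=.
by split; rewrite // !addnS.
Qed.

Lemma memX u : (u \in X) = [|| u \in A, u == j, u \in B | u \in C].
Proof. by rewrite /X mem_cat inE mem_cat. Qed.

Lemma memY u : (u \in Y) = [|| u \in A, u == j, u \in B | u \in C].
Proof. by rewrite -memXY memX. Qed.

Lemma uY : uniq Y.
Proof. by rewrite -(perm_uniq (s1:=X)) // /X /Y perm_cat2l -cat1s perm_catCA. Qed.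

Lemma Blt u : u \in B -> u < j.
Proof. by move/allP: hB; apply. Qed.

Lemma region (u : nat) : u \in X ->
  [\/ u \in A /\ [/\ index u X = index u A, index u Y = index u A & index u A < size A],
      u = j /\ (index u X = size A /\ index u Y = size A + size B),
      u \in B /\ [/\ index u X = size A + (index u B).+1, index u Y = size A + index u B,
                     index u B < size B & u < j] |
      u \in C /\ (index u X = size A + (size B + index u C).+1 /\
                  index u Y = size A + (size B + index u C).+1)].
Proof.
rewrite /X mem_cat inE mem_cat => /orP[uA|/orP[/eqP ->|/orP[uB|uC]]].
- by apply: Or41; split => //; case: (idxA uA) => [-> [-> ->]].
- by apply: Or42; split => //; apply: idxj.
- by apply: Or43; split => //; case: (idxB uB) => [-> [-> ->]]; rewrite Blt.
- by apply: Or44; split => //; apply: idxC.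
Qed.

Lemma spY (x z : nat) : x \in B -> z \in C -> z < x -> c231 X.
Proof.
move=> xB zC zx.
have Cn : C <> [::] by move=> C0; rewrite C0 in zC.
have cj : j < head 0 C by case: hC.
have cC : head 0 C \in C by case: (C) Cn => // c s _; rewrite /= inE eqxx.
have xj := Blt xB.
have iz : 0 < index z C.
  case: C Cn zC cj cC => // c s _; rewrite /= inE => /orP[/eqP zc|zs] cj _.
    by rewrite -zc in cj; lia.
  have cz : c != z by apply/eqP => cz; rewrite cz in cj; lia.
  by rewrite (negbTE cz).
have ic : index (head 0 C) C = 0 by case: (C) Cn => // c s _; rewrite /= eqxx.
case: (idxB xB) => ix1 [ix2 ix3].
case: (idxC zC) => iz1 iz2.
case: (idxC cC) => ic1 ic2.
exists x, (head 0 C), z; split; last by apply/andP; split; lia.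
split; try (rewrite memX ?xB ?zC ?cC ?orbT //); lia.
Qed.

Lemma spX (x z : nat) : x \in A -> z \in B -> z < x -> x < j -> c231 Y.
Proof.
move=> xA zB zx xj.
have An : A <> [::] by move=> A0; rewrite A0 in xA.
have aj : j < last 0 A by case: hA.
have aA : last 0 A \in A by rewrite -nth_last mem_nth // ltn_predL; case: (A) An.
have ia : index (last 0 A) A = (size A).-1.
  by rewrite -nth_last index_uniq //; [rewrite ltn_predL; case: (A) An|
     case: disj => _ _ _ _ _; move: uX; rewrite /X cat_uniq => /andP[]].
have ix : index x A < (size A).-1.
  have : index x A < size A by rewrite index_mem.
  have : index x A != (size A).-1.
    apply/eqP => e; move: (nth_index 0 xA); rewrite e nth_last => xa.
    by rewrite -xa in xj; move: (ltn_trans aj xj); rewrite ltnn.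
  lia.
case: (idxA xA) => ix1 [ix2 ix3].
case: (idxA aA) => ia1 [ia2 ia3].
case: (idxB zB) => iz1 [iz2 iz3].
exists x, (last 0 A), z; split; last by apply/andP; split; lia.
split; try (rewrite memY ?xA ?zB ?aA ?orbT //); lia.
Qed.

Lemma ordXY (u v : nat) : u \in X -> v \in X -> index u Y < index v Y ->
  (index u X < index v X) \/ (u \in B /\ v = j).
Proof.
move=> us vs h.
case: (region us) => [[uA [? ? ?]]|[uj [? ?]]|[uB [? ? ? ?]]|[uC [? ?]]];
case: (region vs) => [[vA [? ? ?]]|[vj [? ?]]|[vB [? ? ? ?]]|[vC [? ?]]];
  try (by right); left; lia.
Qed.

Lemma ordYX (u v : nat) : u \in X -> v \in X -> index u X < index v X ->
  (index u Y < index v Y) \/ (u = j /\ v \in B).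
Proof.
move=> us vs h.
case: (region us) => [[uA [? ? ?]]|[uj [? ?]]|[uB [? ? ? ?]]|[uC [? ?]]];
case: (region vs) => [[vA [? ? ?]]|[vj [? ?]]|[vB [? ? ? ?]]|[vC [? ?]]];
  try (by right); left; lia.
Qed.

Lemma key : c231 X <-> c231 Y.
Proof.
split.
- case=> x [y [z [[xs ys zs ixy iyz] /andP[h1 h2]]]].
  case: (ordYX xs ys ixy) => [ixy'|[xj yB]]; last by move: (Blt yB); lia.
  case: (ordYX ys zs iyz) => [iyz'|[yj zB]].
    by exists x, y, z; split; [split; rewrite -?memXY | apply/andP].
  case: (region xs) => [[xA [? ? ?]]|[xj' [? ?]]|[xB [? ? ? ?]]|[xC [? ?]]].
  + by apply: (spX xA zB); lia.
  + exfalso; lia.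
  + rewrite yj in ixy; move: (idxj); lia.
  + rewrite yj in ixy; move: (idxj); lia.
- case=> x [y [z [[xs ys zs ixy iyz] /andP[h1 h2]]]].
  rewrite -!memXY in xs ys zs.
  case: (ordXY ys zs iyz) => [iyz'|[yB zj]]; last by move: (Blt yB); lia.
  case: (ordXY xs ys ixy) => [ixy'|[xB yj]].
    by exists x, y, z; split; [split | apply/andP].
  case: (region zs) => [[zA [? ? ?]]|[zj' [? ?]]|[zB [? ? ? ?]]|[zC [? ?]]].
  + rewrite yj in iyz; move: (idxj); lia.
  + exfalso; lia.
  + rewrite yj in iyz; move: (idxj); lia.
  + by apply: (spY xB zC); lia.
Qed.

End Key.
Lemma wextE (w : seq nat) p q : q.+1 = p -> p <= size w -> wext w p = nth 0 w q.
Proof. by move=> <- h; rewrite /wext h. Qed.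

Lemma wext_inj (w : seq nat) p q : uniq w -> 0 < p <= size w -> 0 < q <= size w ->
  wext w p = wext w q -> p = q.
Proof.
move=> uw hp hq; rewrite (@wextE w p p.-1) ?(@wextE w q q.-1); try lia.
move=> e; have := nth_uniq 0 (_ : p.-1 < size w) (_ : q.-1 < size w) uw.
rewrite e eqxx => h; have /esym/eqP : true = (p.-1 == q.-1) by apply: h; lia.
lia.
Qed.

Definition decomp (w v : seq nat) := exists (A B C : seq nat) (j : nat),
  [/\ all (fun b => b < j) B, A = [::] \/ j < last 0 A, C = [::] \/ j < head 0 C &
   (w = A ++ j :: B ++ C /\ v = A ++ B ++ j :: C) \/
   (w = A ++ B ++ j :: C /\ v = A ++ j :: B ++ C)].

Lemma down_decomp (w : seq nat) i k : uniq w -> 0 < i <= size w -> downslope w i ->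
  hop_down_target w i k -> decomp w (ins_at k.-1 (wext w i) (rem_at i.-1 w)).
Proof.
move=> uw hi /andP[d1 d2] [/andP[ik ks] /andP[t1 t2] tmin].
have ej : wext w i = nth 0 w i.-1 by apply: wextE; lia.
move: d1 d2 t1 t2 tmin ej; move Ej: (wext w i) => j d1 d2 t1 t2 tmin ej.
exists (take i.-1 w), (take (k - i) (drop i w)), (drop k w), j.
have eB : size (take (k - i) (drop i w)) = k - i by rewrite size_takel // size_drop; lia.
have eA : size (take i.-1 w) = i.-1 by rewrite size_takel //; lia.
have ew : w = take i.-1 w ++ j :: take (k - i) (drop i w) ++ drop k w.
  rewrite -{1}(cat_take_drop i.-1 w); congr (_ ++ _).
  rewrite (drop_nth 0); last lia.
  rewrite prednK; last lia.
  rewrite ej; congr (_ :: _).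
  rewrite -{1}(cat_take_drop (k - i) (drop i w)) drop_drop subnK //; lia.
split.
- apply/(all_nthP 0) => m; rewrite eB => hm.
  rewrite nth_take // nth_drop.
  elim: m hm => [|m IH] hm.
    by rewrite -(@wextE w i.+1) ?addn0 //; lia.
  have h1 := IH (ltnW hm).
  have hh : i < i + m.+1 < k by lia.
  have := tmin _ hh.
  rewrite (@wextE w (i + m.+1) (i + m)) ; try lia.
  rewrite h1 /= -(@wextE w (i+m.+1).+1 (i + m.+1)) ; try lia.
  rewrite -leqNgt leq_eqVlt => /orP[/eqP e|] //.
  rewrite -Ej in e; have := @wext_inj w _ _ uw _ _ e; lia.
- case: i hi ik d1 {ej ew eA eB Ej tmin t1 t2 d2} => [|[|i]] hi ik d1; first lia.
    by left; apply: take0.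
  right; rewrite -nth_last size_takel /=; last lia.
  rewrite nth_take; last lia.
  by rewrite -(@wextE w i.+1) //; lia.
- case: (ltnP k (size w)) => hk.
    right; rewrite -nth0 nth_drop addn0 -(@wextE w k.+1) //.
  by left; apply: drop_oversize.
- left; split => //.
  rewrite /rem_at /ins_at prednK; last lia.
  have er : take i.-1 w ++ drop i w = (take i.-1 w ++ take (k-i) (drop i w)) ++ drop k w.
    rewrite -catA -{1}(cat_take_drop (k - i) (drop i w)) drop_drop subnK //; lia.
  have es : size (take i.-1 w ++ take (k - i) (drop i w)) = k.-1 by rewrite size_cat eA eB; lia.
  by rewrite er take_size_cat // drop_size_cat // catA.
Qed.

Lemma up_decomp (w : seq nat) i k : uniq w -> 0 < i <= size w -> upslope w i ->
  hop_up_target w i k -> decomp w (ins_at k.-1 (wext w i) (rem_at i.-1 w)).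
Proof.
move=> uw hi /andP[d1 d2] [[/andP[k0 ki] t1 t2] tmax].
have ej : wext w i = nth 0 w i.-1 by apply: wextE; lia.
move: d1 d2 t1 t2 tmax ej; move Ej: (wext w i) => j d1 d2 t1 t2 tmax ej.
exists (take k.-1 w), (take (i - k) (drop k.-1 w)), (drop i w), j.
have eA : size (take k.-1 w) = k.-1 by rewrite size_takel //; lia.
split.
- have claim : forall d, d < i - k -> wext w (i - d.+1) < j.
    elim=> [|d IH] hd.
      by have -> : i - 1 = i.-1 by lia.
    have h1 := IH (ltnW hd).
    have hh : k < i - d.+1 < i by lia.
    have := tmax _ hh.
    rewrite h1 /= -leqNgt.
    have -> : (i - d.+1).-1 = i - d.+2 by lia.
    rewrite leq_eqVlt => /orP[/eqP e|] //.
    rewrite -Ej in e; have := @wext_inj w _ _ uw _ _ e; lia.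
  have eB : size (take (i-k) (drop k.-1 w)) = i - k by rewrite size_takel // size_drop; lia.
  apply/(all_nthP 0) => m; rewrite eB => hm.
  rewrite nth_take // nth_drop.
  have hd : i - k - m.+1 < i - k by lia.
  have := claim _ hd.
  have -> : i - (i - k - m.+1).+1 = k + m by lia.
  rewrite (@wextE w (k + m) (k.-1 + m)) //; lia.
- case: k k0 ki t1 {eA tmax t2} => [|[|k]] k0 ki t1; first lia.
    by left; apply: take0.
  right; rewrite -nth_last size_takel /=; last lia.
  rewrite nth_take; last lia.
  by rewrite -(@wextE w k.+1) //; lia.
- case: (ltnP i (size w)) => hk.
    right; rewrite -nth0 nth_drop addn0 -(@wextE w i.+1) //.
  by left; apply: drop_oversize.
- right; split.
    rewrite -{1}(cat_take_drop k.-1 w); congr (_ ++ _).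
    rewrite -{1}(cat_take_drop (i - k) (drop k.-1 w)); congr (_ ++ _).
    rewrite drop_drop.
    have -> : i - k + k.-1 = i.-1 by lia.
    rewrite (drop_nth 0); last lia.
    by rewrite prednK ?ej //; lia.
  rewrite /rem_at /ins_at prednK; last lia.
  have -> : i.-1 = k.-1 + (i - k) by lia.
  by rewrite takeD -catA take_size_cat // drop_size_cat.
Qed.

Lemma hop_decomp (w v : seq nat) : uniq w -> hop w v -> decomp w v.
Proof.
move=> uw [i [k [hi [[[d t]|[u t]] ->]]]].
- exact: down_decomp.
- exact: up_decomp.
Qed.

Lemma hop_pres (w v : seq nat) : uniq w -> hop w v -> (contains231 w <-> contains231 v).
Proof.
move=> uw h; case: (hop_decomp uw h) => A [B [C [j [hB hA hC [[ew ev]|[ew ev]]]]]];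
  subst w v.
- have pXY : perm_eq (A ++ j :: B ++ C) (A ++ B ++ j :: C)
    by rewrite perm_cat2l -cat1s perm_catCA.
  have uY : uniq (A ++ B ++ j :: C) by rewrite -(perm_uniq pXY).
  by rewrite !c231E //; apply: key.
- have pXY : perm_eq (A ++ j :: B ++ C) (A ++ B ++ j :: C)
    by rewrite perm_cat2l -cat1s perm_catCA.
  have uX : uniq (A ++ j :: B ++ C) by rewrite (perm_uniq pXY).
  by rewrite !c231E //; symmetry; apply: key.
Qed.

Lemma ins_perm m x (s : seq nat) : perm_eq (ins_at m x s) (x :: s).
Proof. by rewrite /ins_at -cat1s perm_catCA cat_take_drop. Qed.

Lemma hop_perm (w v : seq nat) : hop w v -> perm_eq w v.
Proof.
case=> i [k [hi [_ ->]]].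
apply: (@perm_trans _ (wext w i :: rem_at i.-1 w)); last by rewrite perm_sym ins_perm.
have ew : w = take i.-1 w ++ wext w i :: drop i w.
  rewrite -{1}(cat_take_drop i.-1 w); congr (_ ++ _).
  rewrite (drop_nth 0); last lia.
  rewrite prednK; last lia.
  rewrite (@wextE w i i.-1) //; lia.
rewrite {1}ew /rem_at prednK; last lia.
by rewrite -cat1s perm_catCA.
Qed.

Lemma equiv_pres (w v : seq nat) : hop_equiv w v ->
  perm_eq w v /\ (uniq w -> (contains231 w <-> contains231 v)).
Proof.
elim=> {w v} [x y h | x | x y _ [p IH] | x y z _ [p1 I1] _ [p2 I2]].
- by split; [apply: hop_perm | move=> ux; apply: hop_pres].
- by split.
- split; first by rewrite perm_sym.
  by move=> uy; symmetry; apply: IH; rewrite (perm_uniq p).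
- split; first exact: perm_trans p1 p2.
  move=> ux; rewrite (I1 ux); apply: I2; by rewrite -(perm_uniq p1).
Qed.

Theorem mainTheorem15 (n : nat) (w v : seq nat) :
  is_perm n w -> avoids231 w -> hop_equiv w v -> is_perm n v /\ avoids231 v.
Proof.
move=> hw aw he; case: (equiv_pres he) => p I.
have uw : uniq w by rewrite (perm_uniq hw) iota_uniq.
split; first by apply: perm_trans hw; rewrite perm_sym.
by rewrite /avoids231 -(I uw).
Qed.
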